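(* Let $W$ be an ordered vector space which is monotone complete and which carries a faithful normal positive linear functional $\psi$. Let $J$ be a non-empty, upper bounded, upward directed subset of $W$. Then there exists an increasing sequence $(j_n)_{n\geq 1}$ in $J$ such that $\sup_n j_n = \sup J$ (suprema taken in $W$). Moreover, every increasing sequence $(j_n)_{n\ge 1}$ in $J$ satisfying \[ \sup_{n\geq 1}\psi(j_n) = \sup_{j\in J}\psi(j) \] satisfies $\sup_n j_n = \sup J$.
   Context: An ordered vector space $W$ is called monotone complete if every non-empty upper bounded upward directed subset of $W$ has a supremum in $W$. A positive linear functional $\psi$ on $W$ is called faithful if $\psi(a)>0$ for every $a\in W_+\setminus\{0\}$, where $W_+$ is the set of positive elements of $W$. A positive linear map $\phi$ between monotone complete ordered vector spaces is called normal if $\phi(\sup J)=\sup_{j\in J}\phi(j)$ for every non-empty upper bounded upward directed subset $J$ of the domain. (Example: $W$ the Hermitian part of a $\sigma$-finite von Neumann algebra.) *)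

(* Defs.v *)
From HB Require Import structures.
From mathcomp Require Import all_boot all_order all_algebra.
From mathcomp Require Import classical_sets reals.
Set Implicit Arguments. Unset Strict Implicit. Unset Printing Implicit Defensive.
Import Order.TTheory GRing.Theory Num.Theory.
Local Open Scope ring_scope.
Local Open Scope classical_set_scope.

Definition ordered_vspace (R : realType) (W : lmodType R) (le : W -> W -> Prop) :=
  [/\ (forall x, le x x),
      (forall x y, le x y -> le y x -> x = y),
      (forall x y z, le x y -> le y z -> le x z),
      (forall x y z, le x y -> le (x + z) (y + z)) &
      (forall (a : R) x y, 0 <= a -> le x y -> le (a *: x) (a *: y))].

Definition upper_bound {T} (le : T -> T -> Prop) (A : set T) (u : T) :=
  forall a, A a -> le a u.

Definition upper_bounded {T} (le : T -> T -> Prop) (A : set T) :=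
  exists u, upper_bound le A u.

Definition upward_directed {T} (le : T -> T -> Prop) (A : set T) :=
  forall a b, A a -> A b -> exists2 c, A c & le a c /\ le b c.

Definition is_sup {T} (le : T -> T -> Prop) (A : set T) (s : T) :=
  upper_bound le A s /\ forall u, upper_bound le A u -> le s u.

Definition monotone_complete {T} (le : T -> T -> Prop) :=
  forall A : set T, A !=set0 -> upper_bounded le A -> upward_directed le A ->
    exists s, is_sup le A s.

Definition linear_functional (R : realType) (W : lmodType R) (psi : W -> R) :=
  forall (a : R) x y, psi (a *: x + y) = a * psi x + psi y.

Definition positive_functional (R : realType) (W : lmodType R)
  (le : W -> W -> Prop) (psi : W -> R) :=
  linear_functional psi /\ forall x, le 0 x -> 0 <= psi x.

Definition faithful_functional (R : realType) (W : lmodType R)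
  (le : W -> W -> Prop) (psi : W -> R) :=
  forall x, le 0 x -> x <> 0 -> 0 < psi x.

Definition normal_functional (R : realType) (W : lmodType R)
  (le : W -> W -> Prop) (psi : W -> R) :=
  forall (A : set W) (s : W), A !=set0 -> upper_bounded le A ->
    upward_directed le A -> is_sup le A s ->
    is_sup (fun x y : R => x <= y) (psi @` A) (psi s).

(* Main.v *)
Require Import Defs.
From HB Require Import structures.
From mathcomp Require Import all_boot all_order all_algebra.
From mathcomp Require Import classical_sets reals.
From mathcomp Require Import boolp lra.
Import Order.TTheory GRing.Theory Num.Theory.
Local Open Scope ring_scope.
Local Open Scope classical_set_scope.

Theorem theorem1 (R : realType) (W : lmodType R) (le : W -> W -> Prop)
  (psi : W -> R) (J : set W) :
  ordered_vspace le -> monotone_complete le ->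
  positive_functional le psi -> faithful_functional le psi ->
  normal_functional le psi ->
  J !=set0 -> upper_bounded le J -> upward_directed le J ->
  forall s : W, is_sup le J s ->
  (exists j : nat -> W, (forall n, J (j n)) /\ (forall n, le (j n) (j n.+1)) /\
      is_sup le (range j) s) /\
  (forall j : nat -> W, (forall n, J (j n)) -> (forall n, le (j n) (j n.+1)) ->
      (exists t : R, is_sup (fun x y : R => x <= y) (psi @` J) t /\
                     is_sup (fun x y : R => x <= y) (range (psi \o j)) t) ->
      is_sup le (range j) s).
Proof.
move=> [refl anti trans addm scalm] mc [lin pos] faith norm J0 Jb dirJ s sJ.
have psiB : forall x y, psi (y - x) = psi y - psi x.
  by move=> x y; rewrite addrC -scaleN1r lin mulN1r addrC.
have le0B : forall x y, le x y -> le 0 (y - x).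
  by move=> x y lxy; have := addm x y (-x) lxy; rewrite subrr.
have psimono : forall x y, le x y -> psi x <= psi y.
  move=> x y /le0B /pos; by rewrite psiB subr_ge0.
have [ubs ls] := norm J s J0 Jb dirJ sJ.
have part2 : forall j : nat -> W, (forall n, J (j n)) -> (forall n, le (j n) (j n.+1)) ->
      (exists t : R, is_sup (fun x y : R => x <= y) (psi @` J) t /\
                     is_sup (fun x y : R => x <= y) (range (psi \o j)) t) ->
      is_sup le (range j) s.
  move=> j Jj jinc [t [supJ supj]].
  have jmono : forall m n, (m <= n)%N -> le (j m) (j n).
    move=> m; elim => [|n IH] hmn.
      by move: hmn; rewrite leqn0 => /eqP ->; apply: refl.
    move: hmn; rewrite leq_eqVlt => /orP [/eqP ->|hlt]; first by apply: refl.
    by apply: trans (IH hlt) (jinc n).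
  have rne : range j !=set0 by exists (j 0%N), 0%N.
  have rub : upper_bounded le (range j).
    by exists s => _ [n _ <-]; apply: sJ.1; apply: Jj.
  have rdir : upward_directed le (range j).
    move=> _ _ [m _ <-] [n _ <-]; exists (j (maxn m n)); first by exists (maxn m n).
    by split; apply: jmono; [apply: leq_maxl | apply: leq_maxr].
  have [r rsup] := mc _ rne rub rdir.
  have [ubr lr] := norm _ r rne rub rdir rsup.
  have h1 : t <= psi r.
    apply: supj.2 => _ [n _ <-]; apply: ubr; exists (j n) => //; by exists n.
  have h2 : psi r <= t.
    apply: lr => _ [_ [n _ <-] <-]; apply: supj.1; by exists n.
  have h3 : psi s <= t by apply: ls; apply: supJ.1.
  have h4 : t <= psi s by apply: supJ.2.
  have lrs : le r s by apply: rsup.2 => _ [n _ <-]; apply: sJ.1; apply: Jj.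
  have -> : s = r.
    apply/eqP; rewrite -subr_eq0; apply/eqP.
    apply: contrapT => hne.
    have := faith _ (le0B _ _ lrs) hne; rewrite psiB; lra.
  by [].
split; last exact: part2.
have ex_a : forall n : nat, exists a, J a /\ psi s - (n.+1%:R)^-1 < psi a.
  move=> n; apply: contrapT => hn.
  have : psi s <= psi s - (n.+1%:R)^-1.
    apply: ls => _ [a Ja <-]; rewrite leNgt; apply/negP => h; apply: hn; by exists a.
  have : 0 < (n.+1%:R : R)^-1 by rewrite invr_gt0 ltr0Sn.
  move=> h0 h1; move: h1; rewrite -subr_ge0 addrAC subrr add0r oppr_ge0 leNgt h0.
  by [].
have [a ha] := choice ex_a.
have ex_c : forall p : W * W, exists c, J p.1 -> J p.2 -> J c /\ le p.1 c /\ le p.2 c.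
  move=> [x y]; case: (pselect (J x /\ J y)) => [[Jx Jy]|h].
    have [c Jc [l1 l2]] := dirJ x y Jx Jy; by exists c.
  by exists x => Jx Jy; exfalso; apply: h.
have [f hf] := choice ex_c.
pose j := fix g n := if n is n'.+1 then f (g n', a n) else a 0%N.
have Jj : forall n, J (j n) /\ le (a n) (j n).
  elim => [|n [IH _]] /=; first by split; [apply: (ha 0%N).1 | apply: refl].
  have [c1 [c2 c3]] := hf (j n, a n.+1) IH (ha _).1; by split.
exists j; split; first by move=> n; apply: (Jj n).1.
have jinc : forall n, le (j n) (j n.+1).
  move=> n; have [c1 [c2 c3]] := hf (j n, a n.+1) (Jj n).1 (ha _).1; exact: c2.
split => //.
apply: part2 => //; first by move=> n; apply: (Jj n).1.
exists (psi s); split; first by split.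
split.
  move=> _ [n _ <-]; apply: ubs; exists (j n) => //; apply: (Jj n).1.
move=> u ub; rewrite leNgt; apply/negP => hu.
set e := psi s - u.
have e0 : 0 < e by rewrite subr_gt0.
set N := Num.Def.archi_bound (e^-1).
have hN : e^-1 < N%:R by apply: archi_boundP; rewrite invr_ge0 ltW.
have hN1 : (N.+1%:R : R)^-1 < e.
  rewrite invf_plt ?posrE ?ltr0Sn //.
  apply: lt_le_trans hN _; rewrite ler_nat; exact: leqnSn.
have h1 := psimono _ _ (Jj N).2.
have h2 := (ha N).2.
have h3 : psi (j N) <= u by apply: ub; exists N.
rewrite /e in hN1; move: h2; set q := (_^-1) => h2; move: hN1; rewrite -/q => hN1; lra.
Qed.
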